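(* Let $S\subseteq\mathbb{S}$ be nonempty. Then there exists a closed s-convex set $C\subseteq\mathbb{S}$ with $S\subseteq C$ if and only if there exist $u\in\mathbb{R}^n$ with $\|u\|=1$ and $\alpha>0$ such that $S\subseteq\mathbb{S}\cap\{x\in\mathbb{R}^n\mid\langle x,u\rangle\ge\alpha\}$.
   Context: Standing setting: $n\ge 2$; $\mathbb{R}^n$ carries the usual inner product $\langle\cdot,\cdot\rangle$ and Euclidean norm $\|\cdot\|$; $o$ denotes the zero vector. $\Phi:\mathbb{R}^n\to\mathbb{R}_+:=[0,\infty)$ is a continuous function with $\Phi(tx)=t\Phi(x)$ for all $x\in\mathbb{R}^n$, $t\ge 0$, and $\Phi(x)=0$ iff $x=o$. Set $\mathbb{S}:=\{x\in\mathbb{R}^n\mid \Phi(x)=1\}$ (with the topology induced from $\mathbb{R}^n$), and $\rho:\mathbb{R}^n\to\{o\}\cup\mathbb{S}$, $\rho(x):=x/\Phi(x)$ for $x\neq o$, $\rho(o):=o$. For $x,y\in\mathbb{S}$, $\lambda\in[0,1]$, $\lambda x+_s(1-\lambda)y:=\rho(\lambda x+(1-\lambda)y)$. A nonempty set $S\subseteq\mathbb{S}$ is called s-convex if $\lambda x+_s(1-\lambda)y\in S$ for all $x,y\in S$ and $\lambda\in[0,1]$. *)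

(* Defs.v *)
(* R : realType, R^n = 'rV[R]_n with its
   canonical (product = Euclidean) topology. *)
From HB Require Import structures.
From mathcomp Require Import all_boot all_order all_algebra.
From mathcomp Require Import all_classical all_reals all_analysis.
Set Implicit Arguments. Unset Strict Implicit. Unset Printing Implicit Defensive.
Import Order.TTheory GRing.Theory Num.Theory.
Import numFieldNormedType.Exports.
Local Open Scope classical_set_scope.
Local Open Scope ring_scope.

Section Defs.
Context {R : realType} {n : nat}.

Definition dotR (x y : 'rV[R]_n) : R := \sum_(i < n) x ord0 i * y ord0 i.
Definition enorm (x : 'rV[R]_n) : R := Num.sqrt (dotR x x).

Definition gauge_like (Phi : 'rV[R]_n -> R) : Prop :=
  continuous Phi /\
  (forall x, 0 <= Phi x) /\
  (forall (x : 'rV[R]_n) (t : R), 0 <= t -> Phi (t *: x) = t * Phi x) /\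
  (forall x, Phi x = 0 <-> x = 0).

Definition sphere (Phi : 'rV[R]_n -> R) : set 'rV[R]_n := [set x | Phi x = 1].

Definition rho (Phi : 'rV[R]_n -> R) (x : 'rV[R]_n) : 'rV[R]_n :=
  if x == 0 then 0 else (Phi x)^-1 *: x.

Definition scomb (Phi : 'rV[R]_n -> R) (l : R) (x y : 'rV[R]_n) : 'rV[R]_n :=
  rho Phi (l *: x + (1 - l) *: y).

Definition s_convex (Phi : 'rV[R]_n -> R) (S : set 'rV[R]_n) : Prop :=
  S `<=` sphere Phi /\ S !=set0 /\
  (forall x y l, S x -> S y -> 0 <= l -> l <= 1 -> S (scomb Phi l x y)).

Definition closed_in_sphere (Phi : 'rV[R]_n -> R) (C : set 'rV[R]_n) : Prop :=
  C `<=` sphere Phi /\ exists D : set 'rV[R]_n, closed D /\ C = D `&` sphere Phi.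

End Defs.

(* Main.v *)
Require Import Defs.
From HB Require Import structures.
From mathcomp Require Import all_boot all_order all_algebra.
From mathcomp Require Import all_classical all_reals all_analysis.
From mathcomp Require Import ring lra.
Import Order.TTheory GRing.Theory Num.Theory.
Import numFieldNormedType.Exports.
Local Open Scope classical_set_scope.
Local Open Scope ring_scope.
Set Implicit Arguments. Unset Strict Implicit.

Section Aux.
Context {R : realType} {n : nat}.
Implicit Types (x y z u v w : 'rV[R]_n).

Lemma dotRC x y : dotR x y = dotR y x.
Proof. by apply: eq_bigr => i _; rewrite mulrC. Qed.

Lemma dotRDl x y z : dotR (x + y) z = dotR x z + dotR y z.
Proof. by rewrite /dotR -big_split; apply: eq_bigr => i _; rewrite mxE mulrDl. Qed.

Lemma dotRZl (a : R) x z : dotR (a *: x) z = a * dotR x z.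
Proof. by rewrite /dotR mulr_sumr; apply: eq_bigr => i _; rewrite mxE mulrA. Qed.

Lemma dotRNl x z : dotR (- x) z = - dotR x z.
Proof. by rewrite -scaleN1r dotRZl mulN1r. Qed.

Lemma dotRBl x y z : dotR (x - y) z = dotR x z - dotR y z.
Proof. by rewrite dotRDl dotRNl. Qed.

Lemma dotRDr x y z : dotR z (x + y) = dotR z x + dotR z y.
Proof. by rewrite dotRC dotRDl !(dotRC z). Qed.

Lemma dotRZr (a : R) x z : dotR z (a *: x) = a * dotR z x.
Proof. by rewrite dotRC dotRZl dotRC. Qed.

Lemma dotRNr x z : dotR z (- x) = - dotR z x.
Proof. by rewrite dotRC dotRNl dotRC. Qed.

Lemma dotRBr x y z : dotR z (x - y) = dotR z x - dotR z y.
Proof. by rewrite dotRDr dotRNr. Qed.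

Lemma dotR0l z : dotR 0 z = 0.
Proof. by rewrite -(scale0r 0) dotRZl mul0r. Qed.

Lemma dotR0r z : dotR z 0 = 0.
Proof. by rewrite dotRC dotR0l. Qed.

Lemma dotR_ge0 x : 0 <= dotR x x.
Proof. by apply: sumr_ge0 => i _; rewrite -expr2 sqr_ge0. Qed.

Lemma coord_le_dot x i : x ord0 i ^+ 2 <= dotR x x.
Proof.
rewrite /dotR (bigD1 i) //= -expr2 lerDl.
by apply: sumr_ge0 => j _; rewrite -expr2 sqr_ge0.
Qed.

Lemma dotR_eq0 x : dotR x x = 0 -> x = 0.
Proof.
move=> h; apply/rowP => i; rewrite mxE.
have := coord_le_dot x i; rewrite h => hi.
by apply/eqP; rewrite -sqrf_eq0 eq_le hi sqr_ge0.
Qed.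

Lemma dotR_gt0 x : x != 0 -> 0 < dotR x x.
Proof.
move=> hx; rewrite lt_neqAle dotR_ge0 andbT eq_sym.
by apply/eqP => /dotR_eq0 h; rewrite h eqxx in hx.
Qed.

Lemma sum_cont_seq (T : topologicalType) (r : seq 'I_n) (F : 'I_n -> T -> R) :
  (forall i, continuous (F i)) -> continuous (fun t => \sum_(i <- r) F i t).
Proof.
move=> hF; elim: r => [|i r IH].
  have -> : (fun t : T => \sum_(i <- [::]) F i t) = (fun=> 0) .
    by apply: funext => t; rewrite big_nil.
  by move=> t; apply: cvg_cst.
have -> : (fun t : T => \sum_(j <- i :: r) F j t) =
   (fun t => F i t + \sum_(j <- r) F j t).
  by apply: funext => t; rewrite big_cons.
move=> t; apply: (@continuousD _ R^o _ (F i) (fun t => \sum_(j <- r) F j t)); [exact: hF|exact: IH].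
Qed.

Lemma sum_cont (T : topologicalType) (F : 'I_n -> T -> R) :
  (forall i, continuous (F i)) -> continuous (fun t => \sum_(i < n) F i t).
Proof. exact: sum_cont_seq. Qed.

Lemma dot_cont (T : topologicalType) (f g : T -> 'rV[R]_n) :
  continuous f -> continuous g -> continuous (fun t => dotR (f t) (g t)).
Proof.
move=> hf hg; apply: sum_cont => i t.
apply: (@continuousM R T (fun t => f t ord0 i) (fun t => g t ord0 i) t).
  exact: (@continuous_comp _ _ _ f (fun M : 'rV[R]_n => M ord0 i) t (hf t) (@coord_continuous R _ _ _ _ (f t))).
exact: (@continuous_comp _ _ _ g (fun M : 'rV[R]_n => M ord0 i) t (hg t) (@coord_continuous R _ _ _ _ (g t))).
Qed.

End Aux.

Section PhiSec.
Context {R : realType} {n : nat} (Phi : 'rV[R]_n -> R).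
Hypothesis (Pc : continuous Phi) (P0 : forall x, 0 <= Phi x)
  (Ph : forall (x : 'rV[R]_n) (t : R), 0 <= t -> Phi (t *: x) = t * Phi x)
  (Pz : forall x, Phi x = 0 <-> x = 0).
Implicit Types (x y z u v w : 'rV[R]_n).

Lemma Phi_gt0 x : x != 0 -> 0 < Phi x.
Proof.
move=> hx; rewrite lt_neqAle P0 andbT eq_sym; apply/eqP => /Pz h.
by rewrite h eqxx in hx.
Qed.

Lemma Phi_neq0 x : x != 0 -> Phi x != 0.
Proof. by move=> /Phi_gt0; rewrite lt0r => /andP[]. Qed.

Lemma rhoE x : x != 0 -> rho Phi x = (Phi x)^-1 *: x.
Proof. by rewrite /rho => /negbTE ->. Qed.

Lemma Phi_rho x : x != 0 -> Phi (rho Phi x) = 1.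
Proof.
move=> hx; rewrite rhoE // Ph ?invr_ge0 ?P0 // mulVf //; exact: Phi_neq0.
Qed.

Lemma rho_neq0 x : x != 0 -> rho Phi x != 0.
Proof.
move=> hx; apply/eqP => h; have := Phi_rho hx; rewrite h.
by have := (proj2 (Pz 0) erefl) => ->; move/eqP; rewrite eq_sym oner_eq0.
Qed.

Lemma rho_decomp x : x != 0 -> x = Phi x *: rho Phi x.
Proof. by move=> hx; rewrite rhoE // scalerA mulfV ?scale1r // Phi_neq0. Qed.

Lemma rho_scale t w : 0 < t -> w != 0 -> rho Phi (t *: w) = rho Phi w.
Proof.
move=> t0 hw; have htw : t *: w != 0 by rewrite scaler_eq0 negb_or gt_eqF.
rewrite !rhoE // Ph ?ltW // scalerA invfM mulrAC mulVf ?gt_eqF // mul1r //.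
Qed.

Lemma sphere_neq0 x : Phi x = 1 -> x != 0.
Proof.
move=> h; apply/eqP => hx; move: h; rewrite hx (proj2 (Pz 0) erefl).
by move/eqP; rewrite eq_sym oner_eq0.
Qed.

Lemma sphere_bounded : (0 < n)%N ->
  exists M, 0 < M /\ forall x, Phi x = 1 -> `|x| <= M.
Proof.
move=> n0.
set U := [set x : 'rV[R]_n | `|x| = 1].
have x1 : exists x : 'rV[R]_n, x != 0.
  exists (const_mx 1); apply/eqP => /rowP /(_ (Ordinal n0)).
  by rewrite !mxE; apply/eqP; rewrite oner_eq0.
have U0 : U !=set0.
  case: x1 => x hx; exists (`|x|^-1 *: x); rewrite /U /= normrZ normfV normr_id.
  by rewrite mulVf // normr_eq0.
have Ucl : closed U.
  exact: (preimage_closed (fun x _ => @norm_continuous _ _ x)) (@closed_eq _ 1).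
have Ub : bounded_set U.
  exists 1; split; first by rewrite num_real.
  by move=> M hM x; rewrite /U /= => ->; rewrite ltW.
have Uc : compact U by exact: bounded_closed_compact.
have [x0 /set_mem hx0 hmin] := compact_EVT_min U0 Uc (continuous_subspaceT Pc).
have x00 : x0 != 0 by apply/eqP => h; move: hx0; rewrite /U /= h normr0 => /eqP; rewrite eq_sym oner_eq0.
have m0 := Phi_gt0 x00.
exists (Phi x0)^-1; split; first by rewrite invr_gt0.
move=> x hx; have xn0 := sphere_neq0 hx.
have nx0 : 0 < `|x| by rewrite normr_gt0.
have : Phi x0 <= Phi (`|x|^-1 *: x).
  apply: hmin; apply/mem_set; rewrite /U /= normrZ normfV normr_id mulVf //.
  by rewrite normr_eq0.
rewrite Ph; last by rewrite invr_ge0 ltW.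
rewrite hx mulr1 => h.
by rewrite -(invrK `|x|) lef_pV2 ?posrE ?invr_gt0.
Qed.

End PhiSec.

Section Proj.
Context {R : realType} {n : nat}.
Implicit Types (x y z u v w k : 'rV[R]_n).

Lemma sep_ineq (a b : R) : 0 <= b ->
  (forall s, 0 < s -> s < 1 -> 0 <= 2 * s * a + s ^+ 2 * b) -> 0 <= a.
Proof.
move=> b0 h; rewrite leNgt; apply/negP => a0.
have d0 : 0 < b - 2 * a by lra.
pose s := - a / (b - 2 * a).
have s0 : 0 < s by rewrite /s divr_gt0 // oppr_gt0.
have s1 : s < 1.
  by rewrite /s ltr_pdivrMr // mul1r; lra.
have := h s s0 s1.
have -> : 2 * s * a + s ^+ 2 * b = s * (a * (b - 4 * a) / (b - 2 * a)).
  by rewrite /s; field; rewrite gt_eqF.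
have hq : a * (b - 4 * a) / (b - 2 * a) < 0.
  rewrite pmulr_llt0 ?invr_gt0 // nmulr_rlt0 //; lra.
have : s * (a * (b - 4 * a) / (b - 2 * a)) < 0 by rewrite pmulr_rlt0.
lra.
Qed.

Lemma dot_expand v k (s : R) :
  dotR (v + s *: k) (v + s *: k) = dotR v v + 2 * s * dotR k v + s ^+ 2 * dotR k k.
Proof.
rewrite dotRDl !dotRDr !dotRZl !dotRZr (dotRC v k); ring.
Qed.

Lemma sq_le_bound (a b : R) : a ^+ 2 <= b -> `|a| <= 1 + b.
Proof.
move=> h; have b0 : 0 <= b by apply: le_trans h; exact: sqr_ge0.
have [a1|a1] := leP `|a| 1; first by lra.
have : `|a| <= `|a| ^+ 2 by rewrite expr2 ler_peMr // ltW.
by rewrite real_normK ?num_real //; lra.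
Qed.

Lemma rV_norm_le x (M : R) : 0 <= M -> (forall i, `|x ord0 i| <= M) -> `|x| <= M.
Proof.
move=> M0 h; change (mx_norm x <= M); rewrite mx_normrE.
by apply: bigmax_le => // -[i j] _; rewrite [i]ord1; exact: h.
Qed.

Lemma subw_cont w : continuous (fun k : 'rV[R]_n => k - w).
Proof.
have -> : (fun k : 'rV[R]_n => k - w) = (fun k => k) - (fun=> w) by apply: funext.
move=> k; apply: cvgB; [apply: nbhs_filter|exact: (@cvg_id _ (nbhs k))|apply: cvg_cst]; apply: nbhs_filter.
Qed.

Lemma proj_sep (K : set 'rV[R]_n) : closed K -> K 0 ->
  (forall t k, 0 <= t -> K k -> K (t *: k)) ->
  (forall k1 k2, K k1 -> K k2 -> K (k1 + k2)) ->
  forall w, ~ K w -> exists v, (forall k, K k -> 0 <= dotR k v) /\ 0 < dotR (- w) v.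
Proof.
move=> Kcl K0 Kscale Kadd w Kw.
pose f k := dotR (k - w) (k - w).
have fc : continuous f by apply: dot_cont; exact: subw_cont.
pose B := K `&` [set k | f k <= dotR w w].
have f0 : f 0 = dotR w w by rewrite /f sub0r dotRNl dotRNr opprK.
have B0 : B !=set0 by exists 0; split => //=; rewrite f0.
have Bcl : closed B.
  apply: closedI => //.
  exact: (preimage_closed (fun x _ => fc x)) (@closed_le _ _).
have Bb : bounded_set B.
  exists (2 * (1 + dotR w w)); split; first by rewrite num_real.
  move=> M hM k [_ /= hk]; apply: ltW; apply: le_lt_trans hM.
  apply: rV_norm_le; first by have := dotR_ge0 w; lra.
  move=> i; have -> : k ord0 i = (k - w) ord0 i + w ord0 i by rewrite !mxE subrK.
  apply: le_trans (ler_normD _ _) _.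
  have h1 := sq_le_bound (le_trans (coord_le_dot (k - w) i) hk).
  have h2 := sq_le_bound (coord_le_dot w i).
  lra.
have Bc : compact B by exact: bounded_closed_compact.
have [p /set_mem [Kp /= fp] pmin] := compact_EVT_min B0 Bc (continuous_subspaceT fc).
have pminK : forall k, K k -> f p <= f k.
  move=> k Kk; have [hk|hk] := leP (f k) (dotR w w).
    by apply: pmin; apply/mem_set; split.
  by apply: le_trans fp (ltW hk).
pose v := p - w.
have vn0 : v != 0.
  by apply/eqP => /eqP; rewrite subr_eq0 => /eqP hpw; apply: Kw; rewrite -hpw.
have key : forall k s, K (p + s *: k) -> 0 <= 2 * s * dotR k v + s ^+ 2 * dotR k k.
  move=> k s Kk; have := pminK _ Kk.
  rewrite /f (_ : p + s *: k - w = v + s *: k); last by rewrite /v addrAC.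
  by rewrite dot_expand -/(f p) /f -/v; lra.
exists v; split.
  move=> k Kk; apply: (sep_ineq (dotR_ge0 k)) => s s0 s1.
  by apply: key; apply: Kadd => //; apply: Kscale => //; exact: ltW.
have hp : 0 <= - dotR p v.
  apply: (sep_ineq (dotR_ge0 p)) => s s0 s1.
  have := key p (- s).
  rewrite (_ : p + - s *: p = (1 - s) *: p); last by rewrite scalerBl scale1r scaleNr.
  move=> /(_ (Kscale _ _ _ Kp)); rewrite sqrrN.
  have -> : 2 * - s * dotR p v = 2 * s * - dotR p v by ring.
  by apply; lra.
have -> : - w = v - p by rewrite /v addrAC subrr add0r.
rewrite dotRBl; have := dotR_gt0 vn0; lra.
Qed.

End Proj.

Section ConeSec.
Context {R : realType} {n : nat} (Phi : 'rV[R]_n -> R).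
Hypothesis (Pc : continuous Phi) (P0 : forall x, 0 <= Phi x)
  (Ph : forall (x : 'rV[R]_n) (t : R), 0 <= t -> Phi (t *: x) = t * Phi x)
  (Pz : forall x, Phi x = 0 <-> x = 0).
Variables (C D : set 'rV[R]_n).
Hypothesis (hCD : C = D `&` sphere Phi) (Dcl : closed D)
  (Cconv : forall x y l, C x -> C y -> 0 <= l -> l <= 1 -> C (scomb Phi l x y)).
Implicit Types (x y z u v w k : 'rV[R]_n).

Let decomp := rho_decomp P0 Pz.
Let rscale := rho_scale Ph.
Let gt0 := Phi_gt0 P0 Pz.
Let neq0 := Phi_neq0 P0 Pz.

Let K := fun z : 'rV[R]_n => z = 0 \/ C (rho Phi z).

Let C_sph x : C x -> Phi x = 1.
Proof. by rewrite hCD => -[]. Qed.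

Let C_neq0 x : C x -> x != 0.
Proof. by move=> /C_sph h; exact: (sphere_neq0 Pz h). Qed.

Let rho_C x : C x -> rho Phi x = x.
Proof. by move=> Cx; rewrite rhoE ?C_sph ?invr1 ?scale1r //; exact: C_neq0. Qed.

Let K_nz k : K k -> k != 0 -> C (rho Phi k).
Proof. by move=> [->|//]; rewrite eqxx. Qed.

Lemma K_scale t k : 0 <= t -> K k -> K (t *: k).
Proof.
move=> t0 Kk; have [->|tn0] := eqVneq t 0; first by left; rewrite scale0r.
have [->|kn0] := eqVneq k 0; first by left; rewrite scaler0.
right; rewrite rscale //; first exact: K_nz.
by rewrite lt_neqAle eq_sym tn0.
Qed.

Lemma K_add k1 k2 : K k1 -> K k2 -> K (k1 + k2).
Proof.
move=> K1 K2.
have [->|n1] := eqVneq k1 0; first by rewrite add0r.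
have [->|n2] := eqVneq k2 0; first by rewrite addr0.
have [s0|sn0] := eqVneq (k1 + k2) 0; first by left.
right.
have C1 := K_nz K1 n1; have C2 := K_nz K2 n2.
set c1 := rho Phi k1 in C1; set c2 := rho Phi k2 in C2.
have t1 := gt0 n1; have t2 := gt0 n2.
set l := Phi k1 / (Phi k1 + Phi k2).
have e : k1 + k2 = (Phi k1 + Phi k2) *: (l *: c1 + (1 - l) *: c2).
  rewrite {1}(decomp n1) {1}(decomp n2) -/c1 -/c2.
  rewrite scalerDr !scalerA /l; congr (_ *: _ + _ *: _); field.
    by rewrite gt_eqF // addr_gt0.
  by rewrite gt_eqF // addr_gt0.
have wn0 : l *: c1 + (1 - l) *: c2 != 0.
  by apply: contraNneq sn0 => h; rewrite e h scaler0.
rewrite e rscale //; last by rewrite addr_gt0.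
have := Cconv C1 C2 (l:=l); rewrite /scomb; apply.
  by rewrite /l divr_ge0 // ltW // addr_gt0.
by rewrite /l ler_pdivrMr ?addr_gt0 // mul1r lerDl ltW.
Qed.

Lemma K_notneg c : C c -> ~ K (- c).
Proof.
move=> Cc Kc; have cn0 := C_neq0 Cc.
have ncn0 : - c != 0 by rewrite oppr_eq0.
have Cr := K_nz Kc ncn0.
have a0 := gt0 ncn0; set a := Phi (- c) in a0.
pose l := 1 / (1 + a).
have l0 : 0 <= l by rewrite /l divr_ge0 // ltW // addr_gt0.
have l1 : l <= 1 by rewrite /l ler_pdivrMr ?addr_gt0 // mul1r lerDl ltW.
have := Cconv Cc Cr l0 l1; rewrite /scomb [rho Phi (- c)](rhoE Phi ncn0) -/a.
have -> : l *: c + (1 - l) *: (a^-1 *: - c) = 0.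
  rewrite scalerA scalerN -scaleNr -scalerDl.
  have -> : l + - ((1 - l) * a^-1) = 0.
    rewrite /l; field; apply/andP; split; rewrite gt_eqF //; lra.
  by rewrite scale0r.
rewrite /rho eqxx => /C_sph; rewrite (proj2 (Pz 0) erefl) => /eqP.
by rewrite eq_sym oner_eq0.
Qed.

Lemma K_closed : closed K.
Proof.
rewrite -openC openE => z /= hz; rewrite /interior.
have zn0 : z != 0 by apply/eqP => h; apply: hz; left.
have nDz : ~ D ((Phi z)^-1 *: z).
  move=> Dz; apply: hz; right; rewrite hCD; split; rewrite rhoE //.
  by rewrite /sphere /= Ph ?invr_ge0 // mulVf // neq0.
have gc : {for z, continuous (fun y => (Phi y)^-1 *: y)}.
  apply: continuousZ; last exact: cvg_id.
  by apply: continuousV; [exact: neq0|exact: Pc].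
have N1 : nbhs z ((fun y => (Phi y)^-1 *: y) @^-1` (~` D)).
  by apply: gc; apply: open_nbhs_nbhs; split => //; exact: closed_openC.
have N2 : nbhs z (Phi @^-1` [set r | r != 0]).
  apply: Pc; apply: open_nbhs_nbhs; split; first exact: open_neq.
  exact: neq0.
apply: filterS (filterI N1 N2) => y [/= h1 h2] [hy|Cy].
  by move: h2; rewrite hy (proj2 (Pz 0) erefl) eqxx.
apply: h1; move: Cy; rewrite hCD => -[]; rewrite rhoE //.
by apply/eqP => hy; move: h2; rewrite hy (proj2 (Pz 0) erefl) eqxx.
Qed.

Lemma C_sep c : C c ->
  exists v, (forall x, C x -> 0 <= dotR x v) /\ 0 < dotR c v.
Proof.
move=> Cc.
have [|v [hv hcv]] := proj_sep K_closed _ K_scale K_add (K_notneg Cc); first by left.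
exists v; split; last by rewrite opprK in hcv.
by move=> x Cx; apply: hv; right; rewrite rho_C.
Qed.

End ConeSec.

Section Fin.
Context {R : realType} {n : nat}.

Lemma dotR_sum (I : Type) (s : seq I) (F : I -> 'rV[R]_n) x :
  dotR x (\sum_(i <- s) F i) = \sum_(i <- s) dotR x (F i).
Proof.
elim: s => [|i s IH]; first by rewrite !big_nil dotR0r.
by rewrite !big_cons dotRDr IH.
Qed.

Lemma sum_ge_term (I : eqType) (s : seq I) (F : I -> R) i :
  i \in s -> (forall j, j \in s -> 0 <= F j) -> F i <= \sum_(j <- s) F j.
Proof.
elim: s => [//|a s IH] /=; rewrite inE big_cons => his hF.
have hs : forall j, j \in s -> 0 <= F j by move=> j js; apply: hF; rewrite inE js orbT.
have ha : 0 <= F a by apply: hF; rewrite inE eqxx.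
case/orP: his => [/eqP ->|his].
  by rewrite lerDl big_seq; apply: sumr_ge0 => j js; apply: hs.
by apply: le_trans (IH his hs) _; rewrite lerDr.
Qed.

Lemma min_le_term (I : eqType) (s : seq I) (F : I -> R) i :
  i \in s -> \big[Num.min/1]_(j <- s) F j <= F i.
Proof.
elim: s => [//|a s IH] /=; rewrite inE big_cons => /orP[/eqP ->|his].
  by rewrite ge_min lexx.
by rewrite ge_min (IH his) orbT.
Qed.

Lemma min_gt0 (I : eqType) (s : seq I) (F : I -> R) :
  (forall j, j \in s -> 0 < F j) -> 0 < \big[Num.min/1]_(j <- s) F j.
Proof.
elim: s => [|a s IH] h; first by rewrite big_nil.
rewrite big_cons lt_min h ?inE ?eqxx // IH // => j js.
by apply: h; rewrite inE js orbT.
Qed.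

End Fin.

Lemma dotu_cont {R : realType} {n : nat} (u : 'rV[R]_n) :
  continuous (fun x : 'rV[R]_n => dotR x u).
Proof.
apply: (@dot_cont R n _ (fun x => x) (fun=> u)) => x.
  exact: (@cvg_id _ (nbhs x)).
exact: cst_continuous.
Qed.

Theorem mainTheorem7 (R : realType) (n : nat) (Phi : 'rV[R]_n -> R)
  (hn : (2 <= n)%N) (hPhi : gauge_like Phi)
  (S : set 'rV[R]_n) (hS : S `<=` sphere Phi) (hS0 : S !=set0) :
  (exists C : set 'rV[R]_n,
      C `<=` sphere Phi /\ closed_in_sphere Phi C /\ s_convex Phi C /\ S `<=` C)
  <->
  (exists (u : 'rV[R]_n) (alpha : R),
      enorm u = 1 /\ 0 < alpha /\
      S `<=` sphere Phi `&` [set x | alpha <= dotR x u]).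
Proof.
move: hPhi => [Pc [P0 [Ph Pz]]].
have n0 : (0 < n)%N by apply: leq_trans hn.
have [M [M0 HM]] := sphere_bounded Pc P0 Ph Pz n0.
have sph_cl : closed (sphere Phi).
  exact: (preimage_closed (fun x _ => Pc x)) (@closed_eq _ 1).
split.
- move=> [C [Csph [[_ [D [Dcl hCD]]] [[_ [_ Cconv]] SC]]]].
  have Ccl : closed C by rewrite hCD; exact: closedI.
  have Cb : bounded_set C.
    exists M; split; first by rewrite num_real.
    by move=> M' hM' x /Csph hx; apply: ltW; apply: le_lt_trans hM'; exact: HM.
  have Cc : compact C by exact: bounded_closed_compact.
  have hsep := C_sep Pc P0 Ph Pz hCD Dcl Cconv.
  have : forall c, exists v, C c ->
      (forall x, C x -> 0 <= dotR x v) /\ 0 < dotR c v.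
    move=> c; have [Cc'|nC] := pselect (C c).
      by have [v hv] := hsep c Cc'; exists v.
    by exists 0.
  move=> /choice [vf hvf].
  pose f c := [set x : 'rV[R]_n | dotR c (vf c) / 2 < dotR x (vf c)].
  have fo : forall c, C c -> open (f c).
    move=> c _.
    have -> : f c = (fun x => dotR x (vf c)) @^-1` [set r | dotR c (vf c) / 2 < r] by [].
    apply: open_comp; [move=> x _; exact: dotu_cont | exact: open_gt].
  have fcov : C `<=` \bigcup_(c in C) f c.
    move=> x Cx; exists x => //; rewrite /f /=.
    have := (hvf x Cx).2; lra.
  rewrite compact_cover in Cc.
  have [D' sD' cov] := Cc _ C f fo fcov.
  pose s := finmap.enum_fset D'.
  pose u' := \sum_(c <- s) vf c.
  pose a' := \big[Num.min/1]_(c <- s) (dotR c (vf c) / 2).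
  have DC : forall c, c \in s -> C c.
    by move=> c /sD'; rewrite inE.
  have a'0 : 0 < a'.
    apply: min_gt0 => c /DC Cc'; have := (hvf c Cc').2; lra.
  have hu' : forall x, C x -> a' < dotR x u'.
    move=> x Cx; have [c0 Dc0 hc0] := cov x Cx.
    rewrite /u' dotR_sum.
    apply: (le_lt_trans (min_le_term _ Dc0)).
    apply: (lt_le_trans hc0).
    apply: (sum_ge_term (F := fun i => dotR x (vf i))); first exact: Dc0.
    by move=> j /DC Cj; exact: (hvf j Cj).1.
  have [s0 Ss0] := hS0.
  have u'0 : u' != 0.
    apply/eqP => h; have := hu' s0 (SC _ Ss0); rewrite h dotR0r; lra.
  pose e := enorm u'.
  have e0 : 0 < e by rewrite /e /enorm sqrtr_gt0; exact: dotR_gt0.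
  have ee : dotR u' u' = e ^+ 2 by rewrite /e /enorm sqr_sqrtr // dotR_ge0.
  exists (e^-1 *: u'), (a' / e); split; last split.
  + rewrite /enorm dotRZl dotRZr ee.
    have -> : e^-1 * (e^-1 * e ^+ 2) = 1 by field; rewrite gt_eqF.
    exact: sqrtr1.
  + by rewrite divr_gt0.
  + move=> x Sx; split; first exact: hS.
    rewrite /= dotRZr mulrC ler_pM2l ?invr_gt0 //.
    exact/ltW/hu'/SC.
- move=> [u [alpha [_ [a0 Su]]]].
  pose b := alpha / M.
  have b0 : 0 < b by rewrite divr_gt0.
  pose Dset := [set x : 'rV[R]_n | b * `|x| <= dotR x u].
  exists (Dset `&` sphere Phi); split; first by move=> x [].
  have SC : S `<=` Dset `&` sphere Phi.
    move=> x Sx; have [sx ax] := Su x Sx; split => //.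
    rewrite /Dset /=; apply: le_trans ax.
    have -> : alpha = b * M by rewrite /b divfK // gt_eqF.
    by apply: ler_wpM2l; [exact: ltW | exact: HM].
  split; last split; last exact: SC.
    split; first by move=> x [].
    exists Dset; split => //.
    have -> : Dset = (fun x => dotR x u - b * `|x|) @^-1` [set r | 0 <= r].
      by apply/seteqP; split => x /=; rewrite subr_ge0.
    apply: (preimage_closed _ (@closed_ge _ _)) => x _.
    apply: (@continuousB R R^o _ (fun x => dotR x u) (fun x => b * `|x|) x).
      exact: dotu_cont.
    apply: (@continuousM R _ (fun=> b) (@Num.norm _ 'rV[R]_n) x); first exact: cst_continuous.
    exact: norm_continuous.
  split; first by move=> x [].
  split; first by have [s0 Ss0] := hS0; exists s0; apply: SC.
  move=> x y l [Dx sx] [Dy sy] l0 l1.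
  have xn0 := sphere_neq0 Pz sx; have yn0 := sphere_neq0 Pz sy.
  have dx : 0 < dotR x u.
    by apply: lt_le_trans Dx; rewrite mulr_gt0 // normr_gt0.
  have dy : 0 < dotR y u.
    by apply: lt_le_trans Dy; rewrite mulr_gt0 // normr_gt0.
  set z := l *: x + (1 - l) *: y.
  have dz : dotR z u = l * dotR x u + (1 - l) * dotR y u by rewrite /z dotRDl !dotRZl.
  have dz0 : 0 < dotR z u.
    rewrite dz; have [->|ln0] := eqVneq l 0; first by rewrite mul0r add0r subr0 mul1r.
    have lp : 0 < l by rewrite lt_neqAle eq_sym ln0.
    by apply: ltr_pwDl; [exact: mulr_gt0|apply: mulr_ge0 => //; lra].
  have zn0 : z != 0 by apply/eqP => h; move: dz0; rewrite h dotR0l ltxx.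
  have nz : `|z| <= l * `|x| + (1 - l) * `|y|.
    apply: le_trans (ler_normD _ _) _.
    by rewrite !normrZ !ger0_norm // subr_ge0.
  change ((Dset `&` sphere Phi) (rho Phi z)).
  have sz : sphere Phi (rho Phi z) := Phi_rho P0 Ph Pz zn0.
  suff Dz : Dset (rho Phi z) by split.
  rewrite rhoE // /Dset /= dotRZl normrZ ger0_norm; last by rewrite invr_ge0 P0.
  have t0 : 0 < (Phi z)^-1 by rewrite invr_gt0 (Phi_gt0 P0 Pz).
  rewrite mulrCA ler_pM2l //.
  apply: (le_trans (ler_wpM2l (ltW b0) nz)).
  rewrite dz mulrDr.
  apply: lerD; rewrite mulrCA; apply: ler_wpM2l => //.
  by rewrite subr_ge0.
Qed.
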